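(* Let $\langle H,M,T\rangle$ be an abduction instance, let $X$ be the set of variables of $T$, let $\Pi(H\cup X)=\{\gamma_1,\ldots,\gamma_k\}$, and let $C=\{c_1,\ldots,c_k\}$, $D=\{d_1,\ldots,d_k\}$ be sets of fresh variables. Define $f(\langle H,M,T\rangle)=\langle H',M',T'\rangle$ where $H'=H\cup C\cup D$, $M'=M\cup\{c_i\mid \gamma_i\in T\}\cup\{d_i\mid\gamma_i\notin T\}$, and $T'=\{\neg c_i\vee\neg d_i\mid \gamma_i\in\Pi(H\cup X)\}\cup\{c_i\rightarrow\gamma_i\mid\gamma_i\in\Pi(H\cup X)\}$. Then \[SOL(f(\langle H,M,T\rangle))=\{S\cup\{c_i\mid\gamma_i\in T\}\cup\{d_i\mid\gamma_i\notin T\}\mid S\in SOL(\langle H,M,T\rangle)\}.\]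
   Context: An abduction instance is a triple $\langle H,M,T\rangle$ where $T$ is a propositional theory in 3CNF (so $T\subseteq\Pi(V)$ for $V$ the variables of $T$), $H$ is a set of propositional variables and $M$ a set of propositional variables. $SOL(\langle H,M,T\rangle)=\{H'\subseteq H\mid H'\cup T\text{ consistent and } H'\cup T\models M\}$. For a set of variables $Y$, $\Pi(Y)$ denotes the set of all distinct clauses of three literals over $Y$. *)

(* Defs.v *)
From mathcomp Require Import all_boot.
From mathcomp Require Import finmap.
Set Implicit Arguments. Unset Strict Implicit. Unset Printing Implicit Defensive.
Local Open Scope fset_scope.

(* A literal is a pair (b, x): (true, x) is x, (false, x) is ~x. *)
Definition literal (V : choiceType) := (bool * V)%type.
Definition clause (V : choiceType) := {fset literal V}.
Definition theory (V : choiceType) := {fset clause V}.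

Definition sat_lit (V : choiceType) (a : V -> bool) (l : literal V) : bool :=
  a l.2 == l.1.
Definition sat_clause (V : choiceType) (a : V -> bool) (g : clause V) : bool :=
  has (sat_lit a) g.
Definition sat_theory (V : choiceType) (a : V -> bool) (T : theory V) : bool :=
  all (sat_clause a) T.

Definition consistent (V : choiceType) (S : {fset V}) (T : theory V) : Prop :=
  exists a : V -> bool, sat_theory a T /\ (forall x, x \in S -> a x).

Definition entails (V : choiceType) (S : {fset V}) (T : theory V) (M : {fset V}) : Prop :=
  forall a : V -> bool, sat_theory a T -> (forall x, x \in S -> a x) ->
    forall m, m \in M -> a m.

Definition SOL (V : choiceType) (H M : {fset V}) (T : theory V) (S : {fset V}) : Prop :=
  S `<=` H /\ consistent S T /\ entails S T M.

Definition vars_clause (V : choiceType) (g : clause V) : {fset V} :=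
  [fset l.2 | l in g].
Definition vars (V : choiceType) (T : theory V) : {fset V} :=
  \bigcup_(g <- T) vars_clause g.

Definition lits (V : choiceType) (Y : {fset V}) : {fset literal V} :=
  [fset (true, x) | x in Y] `|` [fset (false, x) | x in Y].
Definition Pi (V : choiceType) (Y : {fset V}) : {fset clause V} :=
  [fset g in fpowerset (lits Y) | #|` g| == 3].

Definition is3CNF (V : choiceType) (T : theory V) : Prop :=
  forall g, g \in T -> #|` g| = 3.

(* The reduction f, given the fresh-variable maps c, d : gamma_i |-> c_i, d_i *)
Definition PiHX (V : choiceType) (H : {fset V}) (T : theory V) : {fset clause V} :=
  Pi (H `|` vars T).
Definition CT (V : choiceType) (H : {fset V}) (T : theory V) (c : clause V -> V) : {fset V} :=
  [fset c g | g in PiHX H T & g \in T].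
Definition DT (V : choiceType) (H : {fset V}) (T : theory V) (d : clause V -> V) : {fset V} :=
  [fset d g | g in PiHX H T & g \notin T].
Definition fH (V : choiceType) (H : {fset V}) (T : theory V) (c d : clause V -> V) : {fset V} :=
  H `|` [fset c g | g in PiHX H T] `|` [fset d g | g in PiHX H T].
Definition fM (V : choiceType) (H M : {fset V}) (T : theory V) (c d : clause V -> V) : {fset V} :=
  M `|` CT H T c `|` DT H T d.
(* clauses  ~c_i \/ ~d_i  and  c_i -> gamma_i  (i.e. ~c_i \/ gamma_i) *)
Definition fT (V : choiceType) (H : {fset V}) (T : theory V) (c d : clause V -> V) : theory V :=
  [fset [fset (false, c g); (false, d g)] | g in PiHX H T]
  `|` [fset (false, c g) |` g | g in PiHX H T].

Definition fresh_maps (V : choiceType) (H M : {fset V}) (T : theory V)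
  (c d : clause V -> V) : Prop :=
  let P := PiHX H T in
  {in P &, injective c} /\ {in P &, injective d} /\
  (forall g g', g \in P -> g' \in P -> c g != d g') /\
  (forall g, g \in P -> c g \notin H `|` vars T `|` M) /\
  (forall g, g \in P -> d g \notin H `|` vars T `|` M).

(* Main.v *)
Require Import Defs.
From mathcomp Require Import all_boot.
From mathcomp Require Import finmap.
Local Open Scope fset_scope.
Set Implicit Arguments. Unset Strict Implicit.

Section S.
Variables (V : choiceType) (H M : {fset V}) (T : theory V) (c d : clause V -> V).
Local Notation P := (PiHX H T).

Lemma inP_lits g l : g \in P -> l \in g -> l.2 \in H `|` vars T.
Proof.
rewrite /PiHX /Pi !inE => /andP[]; rewrite fpowersetE => /fsubsetP sub _ lg.
move: (sub _ lg); rewrite /lits in_fsetU => /orP[] /imfsetP [x xin ->] /=;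
by rewrite -in_fsetU.
Qed.

Lemma inT_P g : is3CNF T -> g \in T -> g \in P.
Proof.
move=> h3 gT; rewrite /PiHX /Pi !inE fpowersetE h3 // eqxx andbT.
apply/fsubsetP => [[b x]] lg.
have xv : x \in H `|` vars T.
  rewrite in_fsetU; apply/orP; right; rewrite /vars.
  apply/bigfcupP; exists g; first by rewrite gT.
  by apply/imfsetP; exists (b, x).
by rewrite /lits in_fsetU; case: b lg => lg; apply/orP; [left|right]; apply/imfsetP; exists x.
Qed.

Definition Call := [fset c g | g in P].
Definition Dall := [fset d g | g in P].
Definition ext (a : V -> bool) x :=
  if x \in Call `|` Dall then x \in CT H T c `|` DT H T d else a x.

Lemma fresh_not_in g x (hf : fresh_maps H M T c d) : g \in P ->
  x \in H `|` vars T `|` M -> (c g != x) && (d g != x).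
Proof.
case: hf => [_ [_ [_ [hc hd]]]] gP xin; apply/andP; split.
  by apply: contraNneq (hc g gP) => ->.
by apply: contraNneq (hd g gP) => ->.
Qed.

Lemma ext_other a x : fresh_maps H M T c d ->
  x \in H `|` vars T `|` M -> ext a x = a x.
Proof.
move=> hf xin.
have nC : x \notin Call.
  apply/imfsetP => [[g gP xe]].
  by have := fresh_not_in hf gP xin; rewrite -xe eqxx.
have nD : x \notin Dall.
  apply/imfsetP => [[g gP xe]].
  by have := fresh_not_in hf gP xin; rewrite -xe eqxx andbF.
by rewrite /ext in_fsetU (negbTE nC) (negbTE nD).
Qed.

Lemma ext_c a g : fresh_maps H M T c d -> g \in P -> ext a (c g) = (g \in T).
Proof.
move=> hf gP; have [ci [di [cd _]]] := hf.
rewrite /ext in_fsetU (_ : c g \in Call) /=; last by apply/imfsetP; exists g.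
rewrite in_fsetU; apply/idP/idP.
  case/orP => /imfsetP [h /= /andP[hP hT] e].
    by rewrite (ci _ _ gP hP e).
  by move: (cd g h gP hP); rewrite e eqxx.
by move=> gT; rewrite /CT; apply/orP; left; apply/imfsetP; exists g => //; rewrite !inE /= gT andbT; move: gP; rewrite /PiHX /Pi !inE.
Qed.

Lemma ext_d a g : fresh_maps H M T c d -> g \in P -> ext a (d g) = (g \notin T).
Proof.
move=> hf gP; have [ci [di [cd _]]] := hf.
rewrite /ext in_fsetU (_ : d g \in Dall) ?orbT /=; last by apply/imfsetP; exists g.
rewrite in_fsetU; apply/idP/idP.
  case/orP => /imfsetP [h /= /andP[hP hT] e].
    by move: (cd h g hP gP); rewrite e eqxx.
  by rewrite (di _ _ gP hP e).
by move=> gT; rewrite /DT; apply/orP; right; apply/imfsetP; exists g => //; rewrite !inE /= gT andbT; move: gP; rewrite /PiHX /Pi !inE.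
Qed.

Lemma satcP a (K : clause V) : reflect (exists2 l, l \in K & sat_lit a l) (sat_clause a K).
Proof. exact: hasP. Qed.

Lemma sattP a (U : theory V) : reflect (forall K, K \in U -> sat_clause a K) (sat_theory a U).
Proof. exact: allP. Qed.

Lemma fT_cases K : K \in fT H T c d ->
  (exists2 g, g \in P & K = [fset (false, c g); (false, d g)]) \/
  (exists2 g, g \in P & K = (false, c g) |` g).
Proof. by rewrite /fT in_fsetU => /orP[] /imfsetP [g gP ->]; [left|right]; exists g. Qed.

Lemma sat_ext a : fresh_maps H M T c d -> sat_theory a T -> sat_theory (ext a) (fT H T c d).
Proof.
move=> hf /sattP sT; apply/sattP => K /fT_cases [] [g gP ->].
  apply/satcP; case gT: (g \in T).
    by exists (false, d g); rewrite ?in_fset2 ?eqxx ?orbT // /sat_lit /= ext_d // gT.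
  by exists (false, c g); rewrite ?in_fset2 ?eqxx // /sat_lit /= ext_c // gT.
case gT: (g \in T).
  have /satcP [l lg sl] := sT _ gT.
  apply/satcP; exists l; first by rewrite in_fset1U lg orbT.
  have lin : l.2 \in H `|` vars T `|` M by rewrite in_fsetU (inP_lits gP lg).
  by rewrite /sat_lit ext_other.
apply/satcP; exists (false, c g); first by rewrite in_fset1U eqxx.
by rewrite /sat_lit /= ext_c // gT.
Qed.

Lemma satT_of_fT a : is3CNF T -> sat_theory a (fT H T c d) ->
  (forall g, g \in T -> a (c g)) -> sat_theory a T.
Proof.
move=> h3 /sattP sf hc; apply/sattP => g gT.
have gP := inT_P h3 gT.
have /satcP [l] : sat_clause a ((false, c g) |` g).
  by apply: sf; rewrite /fT in_fsetU; apply/orP; right; apply/imfsetP; exists g.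
rewrite in_fset1U => /orP[/eqP -> | lg sl]; first by rewrite /sat_lit /= hc.
by apply/satcP; exists l.
Qed.

Lemma neg_only v K l : v \notin H `|` vars T -> K \in fT H T c d -> l \in K -> l.2 = v -> l.1 = false.
Proof.
move=> vn /fT_cases [] [h hP ->].
  by rewrite in_fset2 => /orP[] /eqP ->.
rewrite in_fset1U => /orP[/eqP -> //| lh e].
by move: vn; rewrite -e (inP_lits hP lh).
Qed.

Lemma flip_sat a0 v : v \notin H `|` vars T -> sat_theory a0 (fT H T c d) ->
  sat_theory (fun x => if x == v then false else a0 x) (fT H T c d).
Proof.
move=> vn /sattP s0; apply/sattP => K KT.
have /satcP [l lK sl] := s0 K KT.
apply/satcP; exists l => //; rewrite /sat_lit.
case: ifP => [/eqP e|_]; last exact: sl.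
by rewrite (neg_only vn KT lK e).
Qed.

Lemma c_fresh g : fresh_maps H M T c d -> g \in P -> c g \notin H `|` vars T.
Proof.
case=> [_ [_ [_ [hc _]]]] gP; move: (hc g gP); rewrite !in_fsetU !negb_or.
by case/andP => /andP[-> ->].
Qed.

Lemma d_fresh g : fresh_maps H M T c d -> g \in P -> d g \notin H `|` vars T.
Proof.
case=> [_ [_ [_ [_ hd]]]] gP; move: (hd g gP); rewrite !in_fsetU !negb_or.
by case/andP => /andP[-> ->].
Qed.

Lemma both_false a g : g \in P -> sat_theory a (fT H T c d) -> a (c g) -> a (d g) -> False.
Proof.
move=> gP /sattP sf ac ad.
have /satcP [l] : sat_clause a [fset (false, c g); (false, d g)].
  by apply: sf; rewrite /fT in_fsetU; apply/orP; left; apply/imfsetP; exists g.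
by rewrite in_fset2 /sat_lit => /orP[] /eqP -> /=; rewrite ?ac ?ad.
Qed.

Lemma S_ext (a : V -> bool) S : fresh_maps H M T c d -> S `<=` H -> (forall x, x \in S -> a x) ->
  forall x, x \in S `|` CT H T c `|` DT H T d -> ext a x.
Proof.
move=> hf /fsubsetP sub aS x; rewrite !in_fsetU => /orP[/orP[xS|]|].
- by rewrite ext_other ?aS // !in_fsetU sub.
- by case/imfsetP => g /andP[gP gT] ->; rewrite ext_c.
- by case/imfsetP => g /andP[gP gT] ->; rewrite ext_d.
Qed.

End S.

Theorem lemma1 (V : choiceType) (H M : {fset V}) (T : theory V)
  (c d : clause V -> V) :
  is3CNF T ->
  fresh_maps H M T c d ->
  forall S' : {fset V},
    SOL (fH H T c d) (fM H M T c d) (fT H T c d) S' <->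
    exists S : {fset V}, SOL H M T S /\ S' = S `|` CT H T c `|` DT H T d.
Proof.
move=> h3 hf S'; split.
- move=> [sub [[a0 [sa0 Sa0]] ent]].
  have key1 : forall g, g \in PiHX H T -> g \in T -> c g \in S'.
    move=> g gP gT; apply/negPn/negP => ncg.
    pose a1 := fun x => if x == c g then false else a0 x.
    have sa1 : sat_theory a1 (fT H T c d) := (flip_sat (c_fresh hf gP) sa0).
    have : a1 (c g).
      apply: (ent a1 sa1).
        move=> x xS; rewrite /a1; case: ifP => [/eqP e|_]; last exact: Sa0.
        by move: ncg; rewrite -e xS.
      by rewrite /fM !in_fsetU; apply/orP; left; apply/orP; right; apply/imfsetP; exists g => //=; rewrite !inE /= gT andbT; move: gP; rewrite /PiHX /Pi !inE.
    by rewrite /a1 eqxx.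
  have key2 : forall g, g \in PiHX H T -> g \notin T -> d g \in S'.
    move=> g gP gT; apply/negPn/negP => ncg.
    pose a1 := fun x => if x == d g then false else a0 x.
    have sa1 : sat_theory a1 (fT H T c d) := (flip_sat (d_fresh hf gP) sa0).
    have : a1 (d g).
      apply: (ent a1 sa1).
        move=> x xS; rewrite /a1; case: ifP => [/eqP e|_]; last exact: Sa0.
        by move: ncg; rewrite -e xS.
      by rewrite /fM !in_fsetU; apply/orP; right; apply/imfsetP; exists g => //=; rewrite !inE /= gT andbT; move: gP; rewrite /PiHX /Pi !inE.
    by rewrite /a1 eqxx.
  have eS' : S' = (S' `&` H) `|` CT H T c `|` DT H T d.
    apply/fsetP => x; rewrite !in_fsetU in_fsetI; apply/idP/idP.
      move=> xS; move/fsubsetP: sub => /(_ x xS); rewrite /fH !in_fsetU.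
      case/orP => [/orP[xH|]|].
      + by rewrite xS xH.
      + case/imfsetP => g gP xe; subst x; case gT: (g \in T).
          by apply/orP; left; apply/orP; right; apply/imfsetP; exists g => //=; rewrite !inE /= gT andbT; move: gP; rewrite /PiHX /Pi !inE.
        exfalso; apply: (both_false gP sa0 (Sa0 _ xS)).
        by apply: Sa0; apply: key2 => //; rewrite gT.
      + case/imfsetP => g gP xe; subst x; case gT: (g \in T); last first.
          by apply/orP; right; apply/imfsetP; exists g => //=; rewrite !inE /= gT andbT; move: gP; rewrite /PiHX /Pi !inE.
        exfalso; apply: (both_false gP sa0 _ (Sa0 _ xS)).
        by apply: Sa0; apply: key1.
    case/orP => [/orP[/andP[]//|]|].
      by case/imfsetP => g /andP[gP gT] ->; apply: key1.
    by case/imfsetP => g /andP[gP gT] ->; apply: key2.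
  exists (S' `&` H); split => //.
  split; first exact: fsubsetIr.
  split.
    exists a0; split; last by move=> x; rewrite in_fsetI => /andP[/Sa0].
    apply: (satT_of_fT h3 sa0) => g gT; apply: Sa0; apply: key1 => //; exact: inT_P.
  move=> a sa aS m mM.
  have hsub : S' `&` H `<=` H by exact: fsubsetIr.
  have em : ext H T c d a m.
    apply: (ent _ (sat_ext hf sa)); last by rewrite /fM !in_fsetU mM.
    by rewrite eS'; exact: (S_ext hf hsub aS).
  by rewrite (ext_other _ hf) in em => //; rewrite !in_fsetU mM !orbT.
- case=> S [[sub [[a0 [sa0 Sa0]] ent]] ->].
  split.
    rewrite /fH; apply/fsubsetP => x; rewrite !in_fsetU => /orP[/orP[xS|]|].
    + by move/fsubsetP: sub => /(_ x xS) ->.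
    + by case/imfsetP => g /andP[gP _] ->; apply/orP; left; apply/orP; right; apply/imfsetP; exists g.
    + by case/imfsetP => g /andP[gP _] ->; apply/orP; right; apply/imfsetP; exists g.
  split.
    exists (ext H T c d a0); split; first exact: (sat_ext hf sa0).
    exact: (S_ext hf sub Sa0).
  move=> a sa aS m; rewrite /fM !in_fsetU => /orP[/orP[mM|mC]|mD].
  + apply: (ent a) => //; last by move=> x xS; apply: aS; rewrite !in_fsetU xS.
    apply: (satT_of_fT h3 sa) => g gT; apply: aS; rewrite !in_fsetU; apply/orP; left; apply/orP; right.
    apply/imfsetP; exists g => //=; rewrite !inE /= gT andbT.
    by have := inT_P H h3 gT; rewrite /PiHX /Pi !inE.
  + by apply: aS; rewrite !in_fsetU mC orbT.
  + by apply: aS; rewrite !in_fsetU mD orbT.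
Qed.
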